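(* For $p\in(0,1)$ let $X_p$ be a geometric random variable with $P\{X_p=k\}=p(1-p)^k$, $k=0,1,2,\dots$. Then $$\inf_{p\in(0,1)}P\left\{|X_p-E[X_p]|\le\sqrt{\mathrm{Var}(X_p)}\right\}=\inf_{p\in(0,1)}P\left\{|X_p-E[X_p]|<\sqrt{\mathrm{Var}(X_p)}\right\}=\frac34.$$ *)

(* Defs.v *)
From Stdlib Require Import Reals.
From Coquelicot Require Import Coquelicot.
Open Scope R_scope.

Definition geom_pmf (p : R) (k : nat) : R := p * (1 - p) ^ k.

Definition geom_mean (p : R) : R := Series (fun k => INR k * geom_pmf p k).

Definition geom_var (p : R) : R :=
  Series (fun k => (INR k - geom_mean p) ^ 2 * geom_pmf p k).

Definition geom_prob_le (p : R) : R :=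
  Series (fun k => if Rle_dec (Rabs (INR k - geom_mean p)) (sqrt (geom_var p))
                   then geom_pmf p k else 0).

Definition geom_prob_lt (p : R) : R :=
  Series (fun k => if Rlt_dec (Rabs (INR k - geom_mean p)) (sqrt (geom_var p))
                   then geom_pmf p k else 0).

(* Main.v *)
Require Import Defs.
From Stdlib Require Import Reals Lra Lia.
From Coquelicot Require Import Coquelicot.
Open Scope R_scope.

Lemma lim_inv_n1 : is_lim_seq (fun n => / (INR n + 1)) 0.
Proof.
  replace (Finite 0) with (Rbar_inv p_infty) by reflexivity.
  apply is_lim_seq_inv; [|discriminate].
  eapply is_lim_seq_plus. apply is_lim_seq_INR. apply is_lim_seq_const.
  reflexivity.
Qed.

Lemma ex_sq (q : R) : 0 < q < 1 -> ex_series (fun n => (INR n + 1)^2 * q^n).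
Proof.
  intros Hq.
  apply ex_series_Rabs.
  apply ex_series_DAlembert with (k := q). lra.
  - intros n. pose proof (pos_INR n). apply Rgt_not_eq.
    apply Rmult_lt_0_compat. nra. apply pow_lt; lra.
  - apply is_lim_seq_ext with (u := fun n => q * ((1 + / (INR n + 1)) * (1 + / (INR n + 1)))).
    + intros n. pose proof (pos_INR n). rewrite S_INR.
      rewrite Rabs_pos_eq.
      * simpl. field. repeat split; try lra; apply Rgt_not_eq; try apply pow_lt; lra.
      * apply Rlt_le. apply Rdiv_lt_0_compat; apply Rmult_lt_0_compat; apply pow_lt; lra.
    + replace (Finite q) with (Finite (q * ((1 + 0) * (1 + 0)))) by (f_equal; ring).
      apply is_lim_seq_mult'. apply is_lim_seq_const.
      apply is_lim_seq_mult'; apply is_lim_seq_plus'; try apply is_lim_seq_const; apply lim_inv_n1.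
Qed.

Lemma exR_le (a b : nat -> R) : (forall n, Rabs (a n) <= b n) -> ex_series b -> ex_series a.
Proof. intros H Hb. apply (@ex_series_le R_AbsRing R_CompleteNormedModule a b); [exact H | exact Hb]. Qed.

Lemma exR_scal (c : R) (a : nat -> R) : ex_series a -> ex_series (fun n => c * a n).
Proof. intros H. exact (ex_series_scal_l c a H). Qed.

Lemma exR_plus (a b : nat -> R) : ex_series a -> ex_series b -> ex_series (fun n => a n + b n).
Proof. intros H1 H2. exact (ex_series_plus a b H1 H2). Qed.

Section G.
Variable p : R.
Hypothesis Hp : 0 < p < 1.
Let q := 1 - p.

Lemma pmf_nonneg k : 0 <= geom_pmf p k.
Proof. unfold geom_pmf. apply Rmult_le_pos. lra. apply pow_le. lra. Qed.

Lemma ex0 : ex_series (geom_pmf p).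
Proof.
  unfold geom_pmf. apply exR_scal. apply ex_series_geom. rewrite Rabs_pos_eq; lra.
Qed.

Lemma ex2 : ex_series (fun k => INR k ^ 2 * geom_pmf p k).
Proof.
  apply exR_le with (b := fun n => p * ((INR n + 1)^2 * (1-p)^n)).
  - intros n. unfold geom_pmf. pose proof (pos_INR n).
    assert (0 <= (1-p)^n) by (apply pow_le; lra).
    set (r := (1-p)^n) in *. assert (0 <= p * r) by (apply Rmult_le_pos; lra).
    rewrite Rabs_pos_eq. simpl. nra. simpl. apply Rmult_le_pos. nra. lra.
  - apply exR_scal. apply ex_sq. lra.
Qed.

Lemma ex1 : ex_series (fun k => INR k * geom_pmf p k).
Proof.
  apply exR_le with (b := fun n => p * ((INR n + 1)^2 * (1-p)^n)).
  - intros n. unfold geom_pmf. pose proof (pos_INR n).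
    assert (0 <= (1-p)^n) by (apply pow_le; lra).
    set (r := (1-p)^n) in *. assert (0 <= p * r) by (apply Rmult_le_pos; lra).
    rewrite Rabs_pos_eq. simpl. nra. simpl. apply Rmult_le_pos. nra. lra.
  - apply exR_scal. apply ex_sq. lra.
Qed.

Ltac exs := repeat first [apply ex0 | apply ex1 | apply ex2 | apply exR_plus | apply exR_scal].
Lemma S0 : Series (geom_pmf p) = 1.
Proof.
  rewrite (Series_ext _ (fun k => p * (1-p)^k)) by reflexivity. rewrite Series_scal_l.
  rewrite (Series_ext _ (fun n => (1-p)^n)) by reflexivity.
  rewrite (is_series_unique _ _ (is_series_geom (1-p) ltac:(rewrite Rabs_pos_eq; lra))).
  field. lra.
Qed.

Lemma S1 : Series (fun k => INR k * geom_pmf p k) = (1-p)/p.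
Proof.
  set (S := Series (fun k => INR k * geom_pmf p k)).
  assert (E : S = (1-p) * S + (1-p)).
  { unfold S at 1. rewrite Series_incr_1 by apply ex1.
    rewrite (Series_ext _ (fun k => (1-p) * (INR k * geom_pmf p k) + (1-p) * geom_pmf p k)).
    - rewrite Series_plus by exs.
      rewrite !Series_scal_l, S0. fold S. simpl. ring.
    - intros n. unfold geom_pmf. rewrite S_INR. simpl. ring. }
  apply (Rmult_eq_reg_l p). field_simplify; lra. lra.
Qed.

Lemma S2 : Series (fun k => INR k ^ 2 * geom_pmf p k) = (1-p) * (2 * (1-p) / p + 1) / p.
Proof.
  set (T := Series (fun k => INR k ^ 2 * geom_pmf p k)).
  assert (E : T = (1-p) * T + 2 * (1-p) * ((1-p)/p) + (1-p)).
  { unfold T at 1. rewrite Series_incr_1 by apply ex2.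
    rewrite (Series_ext _ (fun k => ((1-p) * (INR k ^ 2 * geom_pmf p k) + (2 * (1-p)) * (INR k * geom_pmf p k)) + (1-p) * geom_pmf p k)).
    - rewrite Series_plus by exs.
      rewrite Series_plus by exs.
      rewrite !Series_scal_l, S0, S1. fold T. simpl. ring.
    - intros n. unfold geom_pmf. rewrite S_INR. simpl. ring. }
  apply (Rmult_eq_reg_l p). field_simplify; try lra. replace ((p ^ 2 - 3 * p + 2) / p) with (2 * (1-p) * ((1-p)/p) + (1-p)) by (field; lra). lra. lra.
Qed.

Lemma mean_eq : geom_mean p = (1-p)/p.
Proof. apply S1. Qed.

Lemma var_eq : geom_var p = (1-p)/(p^2).
Proof.
  unfold geom_var. rewrite mean_eq.
  rewrite (Series_ext _ (fun k => (INR k ^ 2 * geom_pmf p k + (- 2 * ((1-p)/p)) * (INR k * geom_pmf p k)) + ((1-p)/p)^2 * geom_pmf p k)).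
  - rewrite Series_plus by exs.
    rewrite Series_plus by exs.
    rewrite !Series_scal_l, S0, S1, S2. field. lra.
  - intros n. ring.
Qed.

End G.

Lemma Series_zero : Series (fun _ => 0) = 0.
Proof.
  rewrite (Series_ext _ (fun n => 0 * (fun _ => 0) n)) by (intros; ring).
  rewrite Series_scal_l. ring.
Qed.

Lemma ex_dom p f : 0 < p < 1 -> (forall k, 0 <= f k <= geom_pmf p k) -> ex_series f.
Proof.
  intros Hp H. apply exR_le with (b := geom_pmf p).
  - intros n. rewrite Rabs_pos_eq; apply H.
  - apply ex0; auto.
Qed.

Lemma sum_pmf p n : sum_f_R0 (geom_pmf p) n = 1 - (1-p)^(S n).
Proof.
  induction n as [|n IH]; simpl; unfold geom_pmf in *; simpl in *.
  - ring.
  - rewrite IH. ring.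
Qed.

Lemma lb_series p N f : 0 < p < 1 -> (0 < N)%nat ->
  (forall k, 0 <= f k <= geom_pmf p k) ->
  (forall k, (k < N)%nat -> f k = geom_pmf p k) ->
  1 - (1-p)^N <= Series f.
Proof.
  intros Hp HN Hf Heq.
  rewrite (Series_incr_n f N HN (ex_dom p f Hp Hf)).
  rewrite (sum_eq f (geom_pmf p)).
  - rewrite sum_pmf. replace (S (pred N)) with N by lia.
    assert (0 <= Series (fun k => f (N + k)%nat)).
    { rewrite <- Series_zero. apply Series_le.
      - intros n. split. lra. apply Hf.
      - apply (proj1 (ex_series_incr_n f N)). apply (ex_dom p); auto. }
    lra.
  - intros i Hi. apply Heq. lia.
Qed.

Lemma bernoulli n h : 0 <= h -> 1 + INR n * h <= (1 + h)^n.
Proof.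
  intros Hh. induction n as [|n IH].
  - simpl. lra.
  - rewrite S_INR. simpl. pose proof (pos_INR n). nra.
Qed.

Lemma key_bound (N : nat) t : (0 < N)%nat -> 0 <= t -> t * (INR N + 1) <= INR N ->
  (t * t)^N <= 1/4.
Proof.
  intros HN Ht H.
  assert (HNp : 0 < INR N) by (apply lt_0_INR; lia).
  set (r := INR N / (INR N + 1)).
  assert (Htr : t <= r) by (unfold r; apply (Rmult_le_reg_r (INR N + 1)); [lra|]; field_simplify; lra).
  assert (Hr : r = / (1 + / INR N)) by (unfold r; field; lra).
  assert (Hb : 2 <= (1 + / INR N)^N).
  { pose proof (bernoulli N (/ INR N) (Rlt_le _ _ (Rinv_0_lt_compat _ HNp))).
    rewrite Rinv_r in H0; lra. }
  assert (HrN : r^N <= 1/2).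
  { rewrite Hr. rewrite pow_inv. 
    assert (0 < (1 + / INR N)^N) by lra.
    apply (Rmult_le_reg_r ((1 + / INR N)^N)); auto. rewrite Rinv_l by lra. lra. }
  assert (HtN : t^N <= r^N) by (apply pow_incr; lra).
  assert (0 <= t^N) by (apply pow_le; lra).
  rewrite Rpow_mult_distr. nra.
Qed.

Lemma sd_eq p : 0 < p < 1 -> sqrt (geom_var p) = sqrt (1-p) / p.
Proof.
  intros Hp. rewrite var_eq by auto.
  pose proof (sqrt_sqrt (1-p) ltac:(lra)).
  pose proof (sqrt_pos (1-p)).
  replace ((1-p)/p^2) with ((sqrt (1-p) / p)^2).
  - apply sqrt_pow2. apply Rdiv_le_0_compat; lra.
  - set (s := sqrt (1-p)) in *. rewrite <- H. field. lra.
Qed.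

Lemma good_N p : 0 < p < 1 -> exists N, (0 < N)%nat /\ (1-p)^N <= 1/4 /\
  forall k, (k < N)%nat -> Rabs (INR k - geom_mean p) < sqrt (geom_var p).
Proof.
  intros Hp. rewrite sd_eq, mean_eq by auto.
  set (t := sqrt (1-p)).
  assert (Htt : t * t = 1 - p) by (apply sqrt_sqrt; lra).
  assert (Ht0 : 0 < t) by (apply sqrt_lt_R0; lra).
  assert (Ht1 : t < 1) by nra.
  set (x := t / (1 - t)).
  assert (Hx : 0 < x) by (unfold x; apply Rdiv_lt_0_compat; lra).
  assert (Hms : (t*t + t)/p = x) by (unfold x; replace p with (1 - t*t) by lra; field; split; nra).
  assert (HN : exists N, (0 < N)%nat /\ x <= INR N /\ forall k, (k < N)%nat -> INR k < x).
  { destruct (nfloor_ex x (Rlt_le _ _ Hx)) as [n [Hn1 Hn2]].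
    destruct (Req_dec (INR n) x) as [E|E].
    - exists n. split; [|split].
      + destruct n. simpl in E. lra. lia.
      + lra.
      + intros k Hk. apply lt_INR in Hk. lra.
    - exists (S n). split; [lia|split].
      + rewrite S_INR. lra.
      + intros k Hk. assert (k <= n)%nat by lia. apply le_INR in H. lra. }
  destruct HN as [N [HN0 [HxN Hk]]].
  exists N. split; [auto|split].
  - rewrite <- Htt. apply key_bound; auto. lra.
    assert (t = x * (1-t)) by (unfold x; field; lra). nra.
  - intros k Hlt. specialize (Hk k Hlt). pose proof (pos_INR k).
    rewrite <- Htt. apply Rabs_def1.
    + assert (INR k < (t*t + t)/p) by lra.
      unfold Rdiv in *. nra.
    + assert ((t*t - t)/p < 0).
      { unfold Rdiv. apply Rmult_neg_pos. nra. apply Rinv_0_lt_compat; lra. }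
      unfold Rdiv in *. nra.
Qed.

Lemma lb_lt p : 0 < p < 1 -> 3/4 <= geom_prob_lt p.
Proof.
  intros Hp. destruct (good_N p Hp) as [N [HN [Hq Hk]]].
  unfold geom_prob_lt.
  eapply Rle_trans; [|apply (lb_series p N); auto].
  - lra.
  - intros k. pose proof (pmf_nonneg p Hp k). destruct Rlt_dec; lra.
  - intros k Hlt. destruct Rlt_dec; auto. exfalso; apply n; auto.
Qed.

Lemma lb_le p : 0 < p < 1 -> 3/4 <= geom_prob_le p.
Proof.
  intros Hp. destruct (good_N p Hp) as [N [HN [Hq Hk]]].
  unfold geom_prob_le.
  eapply Rle_trans; [|apply (lb_series p N); auto].
  - lra.
  - intros k. pose proof (pmf_nonneg p Hp k). destruct Rle_dec; lra.
  - intros k Hlt. destruct Rle_dec; auto. exfalso; apply n; left; auto.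
Qed.

Lemma series_first f : ex_series f -> (forall k, f (S k) = 0) -> Series f = f 0%nat.
Proof.
  intros He H. rewrite Series_incr_1 by auto.
  rewrite (Series_ext _ (fun _ => 0)) by auto. rewrite Series_zero. ring.
Qed.

Lemma val_le p : 3/4 < p < 1 -> geom_prob_le p = p.
Proof.
  intros Hp. assert (Hp' : 0 < p < 1) by lra.
  unfold geom_prob_le. rewrite sd_eq, mean_eq by auto.
  set (t := sqrt (1-p)).
  assert (Htt : t * t = 1 - p) by (apply sqrt_sqrt; lra).
  assert (Ht0 : 0 < t) by (apply sqrt_lt_R0; lra).
  assert (Ht1 : t < 1/2) by nra.
  rewrite series_first.
  - simpl. destruct Rle_dec as [_|n]. unfold geom_pmf. simpl. ring.
    exfalso. apply n. replace (0 - (1-p)/p) with (- ((1-p)/p)) by ring.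
    rewrite Rabs_Ropp, Rabs_pos_eq. rewrite <- Htt. unfold Rdiv.
    apply Rmult_le_compat_r. left; apply Rinv_0_lt_compat; lra. nra.
    apply Rdiv_le_0_compat; lra.
  - apply (ex_dom p); auto. intros k. pose proof (pmf_nonneg p Hp' k). destruct Rle_dec; lra.
  - intros k. destruct Rle_dec as [r|]; auto. exfalso.
    pose proof (Rle_abs (INR (S k) - (1-p)/p)).
    rewrite S_INR in *. pose proof (pos_INR k).
    assert ((1-p)/p + t/p < 1).
    { rewrite <- Htt. apply (Rmult_lt_reg_r p). lra. field_simplify; nra. }
    lra.
Qed.

Lemma val_lt : geom_prob_lt (3/4) = 3/4.
Proof.
  assert (Hp' : 0 < 3/4 < 1) by lra.
  unfold geom_prob_lt. rewrite sd_eq, mean_eq by auto.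
  replace (sqrt (1 - 3/4)) with (1/2).
  2:{ replace (1 - 3/4) with ((1/2)^2) by field. rewrite sqrt_pow2; lra. }
  rewrite series_first.
  - simpl. destruct Rlt_dec as [_|n]. unfold geom_pmf. simpl. field.
    exfalso. apply n. apply Rabs_def1; lra.
  - apply (ex_dom (3/4)); auto. intros k. pose proof (pmf_nonneg (3/4) Hp' k). destruct Rlt_dec; lra.
  - intros k. destruct Rlt_dec as [r|]; auto. exfalso.
    pose proof (Rle_abs (INR (S k) - (1-3/4)/(3/4))).
    rewrite S_INR in *. pose proof (pos_INR k).
    lra.
Qed.

Theorem proposition3p1 :
  is_glb_Rbar (fun x => exists p, 0 < p < 1 /\ x = geom_prob_le p) (Finite (3 / 4)) /\
  is_glb_Rbar (fun x => exists p, 0 < p < 1 /\ x = geom_prob_lt p) (Finite (3 / 4)).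
Proof.
  split; split.
  - intros x [p [Hp ->]]. simpl. apply lb_le; auto.
  - intros b Hb. destruct b as [b| |]; simpl; auto.
    + destruct (Rle_dec b (3/4)) as [|Hn]; auto. exfalso.
      set (p := (3/4 + Rmin b 1)/2).
      assert (Hm1 : Rmin b 1 <= b) by apply Rmin_l.
      assert (Hm2 : Rmin b 1 <= 1) by apply Rmin_r.
      assert (Hm3 : 3/4 < Rmin b 1) by (apply Rmin_glb_lt; lra).
      assert (Hp : 3/4 < p < 1) by (unfold p; lra).
      specialize (Hb p). simpl in Hb. 
      assert (b <= p). { apply Hb. exists p. split. lra. rewrite val_le; auto. }
      unfold p in *. lra.
    + apply (Hb (geom_prob_le (7/8))). exists (7/8). split; auto. lra.
  - intros x [p [Hp ->]]. simpl. apply lb_lt; auto.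
  - intros b Hb. destruct b as [b| |]; simpl; auto.
    + specialize (Hb (3/4)). simpl in Hb. apply Hb. exists (3/4). split. lra. rewrite val_lt; auto.
    + apply (Hb (geom_prob_lt (7/8))). exists (7/8). split; auto. lra.
Qed.
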